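(* Let $(\hat\sigma(n))_{n\ge0}$ be the sequence of rationals defined by $\hat\sigma(0)=1$, $\hat\sigma(1)=-\tfrac13$, and for $n\ge1$: $\hat\sigma(2n)=\hat\sigma(n)$, $\hat\sigma(2n+1)=-\tfrac12(\hat\sigma(n)+\hat\sigma(n+1))$. Then for all natural numbers $n,a\ge1$, $$\hat\sigma(2^an+1)=\Big(-\frac12\Big)^a\Big(\hat\sigma(n+1)+\frac13\hat\sigma(n)\Big)-\frac13\hat\sigma(n).$$ *)

(* Defs.v *)
From mathcomp Require Import all_boot all_algebra.
Set Implicit Arguments. Unset Strict Implicit. Unset Printing Implicit Defensive.
Import GRing.Theory Num.Theory.
Local Open Scope ring_scope.

(* sigma_aux k n computes sigmahat(n) provided the fuel k exceeds n. *)
Fixpoint sigma_aux (k : nat) (n : nat) : rat :=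
  match k with
  | 0%N => 0
  | k'.+1 =>
    match n with
    | 0%N => 1
    | 1%N => -(1/3)
    | _ => if odd n then - (1/2) * (sigma_aux k' n./2 + sigma_aux k' n./2.+1)
           else sigma_aux k' n./2
    end
  end.

Definition sigmahat (n : nat) : rat := sigma_aux n.+1 n.

Lemma sigmahat0 : sigmahat 0 = 1. Proof. by []. Qed.
Lemma sigmahat_check : [:: sigmahat 2; sigmahat 3; sigmahat 4; sigmahat 5] ==
  [:: -(1/3); -(1/2)*(-(1/3) + -(1/3)); -(1/3); -(1/2)*(-(1/3) + (1/3))].
Proof. by vm_compute. Qed.

(* Main.v *)
Require Import Defs.
From mathcomp Require Import all_boot all_algebra.
From mathcomp Require Import zify ring.
Import GRing.Theory.
Local Open Scope ring_scope.

Lemma fuel k : forall k' n, (n < k)%N -> (n < k')%N -> sigma_aux k n = sigma_aux k' n.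
Proof.
elim: k => [|k IH] [|k'] n //= Hk Hk'.
case: n Hk Hk' => [|[|n]] Hk Hk' //.
have h1 : (n.+2./2 < k)%N by have := odd_double_half n.+2; rewrite -muln2; lia.
have h1' : (n.+2./2 < k')%N by have := odd_double_half n.+2; rewrite -muln2; lia.
case: ifP => Ho.
  have h2 : (n.+2./2.+1 < k)%N.
    have := odd_double_half n.+2; rewrite Ho -muln2 /=; lia.
  have h2' : (n.+2./2.+1 < k')%N.
    have := odd_double_half n.+2; rewrite Ho -muln2 /=; lia.
  by rewrite (IH k' _ h1 h1') (IH k' _ h2 h2').
by rewrite (IH k' _ h1 h1').
Qed.

Lemma unf k m : (2 <= m)%N -> sigma_aux k.+1 m =
  if odd m then - (1/2) * (sigma_aux k m./2 + sigma_aux k m./2.+1)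
  else sigma_aux k m./2.
Proof. by case: m => [|[|m]]. Qed.

Lemma sh_even n : (1 <= n)%N -> sigmahat (n.*2) = sigmahat n.
Proof.
move=> Hn; rewrite /sigmahat unf; last by rewrite -muln2; lia.
rewrite odd_double doubleK; apply: fuel; rewrite -?muln2; lia.
Qed.

Lemma sh_odd n : (1 <= n)%N ->
  sigmahat (n.*2.+1) = - (1/2) * (sigmahat n + sigmahat n.+1).
Proof.
move=> Hn; rewrite /sigmahat unf; last by rewrite -muln2; lia.
rewrite (_ : odd (n.*2.+1) = true); last by rewrite oddS odd_double.
rewrite (_ : (n.*2.+1)./2 = n); last by rewrite -[RHS](half_bit_double n true).
by rewrite (@fuel (n.*2.+1) n.+1 n) ?(@fuel (n.*2.+1) n.+2 n.+1) // -?muln2; lia.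
Qed.

Lemma sh_pow a n : (1 <= n)%N -> sigmahat (2 ^ a * n) = sigmahat n.
Proof.
move=> Hn; elim: a => [|a IH]; first by rewrite mul1n.
have Hp : (1 <= 2 ^ a * n)%N by rewrite muln_gt0 expn_gt0 /=; lia.
by rewrite expnS -mulnA mul2n sh_even.
Qed.

Theorem lemma4p1 (n a : nat) : (1 <= n)%N -> (1 <= a)%N ->
  sigmahat (2 ^ a * n).+1 =
    (- (1/2)) ^+ a * (sigmahat n.+1 + (1/3) * sigmahat n) - (1/3) * sigmahat n.
Proof.
move=> Hn _; elim: a => [|a IH].
  by rewrite expn0 mul1n expr0 mul1r addrK.
have Hp : (1 <= 2 ^ a * n)%N by rewrite muln_gt0 expn_gt0 /=; lia.
rewrite expnS -mulnA mul2n sh_odd // sh_pow // IH.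
rewrite exprS; set x := sigmahat n; set y := sigmahat n.+1; set p := (- (1/2)) ^+ a.
move: x y p => x y p.
rewrite mulrDr mulrBr mulrA; set c := - (1/2) * p.
rewrite addrCA; congr (_ + _).
rewrite [_ * (_ * x)]mulrA -mulrBl -[- (1 / 3 * x)]mulNr; congr (_ * _).
Qed.
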